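(* Let $N$ be a positive integer, $L>0$, and $\zeta=(\zeta_0,\dots,\zeta_{N+2})\in\mathbb{R}^{N+3}$ with $\zeta_0>\zeta_1>\dots>\zeta_{N+1}>\zeta_{N+2}=0$. With $W^\zeta$ as defined in the context, if $\bar y=(\bar y_0,\dots,\bar y_N)\in\mathbb{R}^{N+1}$ satisfies $\bar y_k\geq0$ and $\bar y_n=0$ for some $0\leq k<n\leq N$, then \[ \frac{\partial}{\partial y_n}W^\zeta(\bar y)=0. \]
   Context: Let $e_0,\dots,e_N$ denote the standard unit vectors of $\mathbb{R}^{N+1}$ (zero-based indexing), and write $y=(y_0,\dots,y_N)$. Define for $i=0,\dots,N+1$: $x_i=-\sum_{j=0}^{i-1}\frac{\zeta_j-\zeta_{i+1}}{\sqrt{\zeta_j-\zeta_{j+1}}}e_j\in\mathbb{R}^{N+1}$; $g_i=L\sqrt{\zeta_i-\zeta_{i+1}}\,e_i$ for $i=0,\dots,N$ and $g_{N+1}=0$; $f_i=\frac L2(\zeta_i+\zeta_{i+1})$ for $i=0,\dots,N$ and $f_{N+1}=0$. For $y\in\mathbb{R}^{N+1}$, $\nu\in\mathbb{R}^{N+1}$, $\alpha=(\alpha_0,\dots,\alpha_{N+1})\in\mathbb{R}^{N+2}$ let $w^\zeta(y,\nu,\alpha)=\frac L2\|y+\nu-\sum_{i=0}^{N+1}\alpha_i(x_i-\frac1Lg_i)\|^2+\sum_{i=0}^{N+1}\alpha_i(f_i-\frac1{2L}\|g_i\|^2)$, and $W^\zeta(y)=\min\{w^\zeta(y,\nu,\alpha):\nu\in\mathbb{R}^{N+1}_+,\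 \alpha\in\Delta_{N+2}\}$, where $\mathbb{R}^{N+1}_+$ is the nonnegative orthant and $\Delta_{N+2}=\{\alpha\in\mathbb{R}^{N+2}:\alpha_i\geq0,\ \sum_i\alpha_i=1\}$. ($W^\zeta$ is differentiable.) *)

(* Defs.v *)
From Stdlib Require Import Reals Lra.
From Coquelicot Require Import Coquelicot.
Open Scope R_scope.

(* Vectors of R^{N+1} are represented as functions nat -> R; only the
   components 0..N are ever used.  zeta : nat -> R, components 0..N+2 used.
   Sums: sum_n a m = a 0 + ... + a m. *)

(* j-th component of x_i, for i = 0..N+1, j = 0..N *)
Definition xv (zeta : nat -> R) (i j : nat) : R :=
  if (j <? i)%nat
  then - ((zeta j - zeta (S i)) / sqrt (zeta j - zeta (S j)))
  else 0.

(* j-th component of g_i; g_{N+1} = 0 *)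
Definition gv (N : nat) (L : R) (zeta : nat -> R) (i j : nat) : R :=
  if ((i <=? N) && (j =? i))%bool
  then L * sqrt (zeta i - zeta (S i))
  else 0.

(* f_i ; f_{N+1} = 0 *)
Definition fv (N : nat) (L : R) (zeta : nat -> R) (i : nat) : R :=
  if (i <=? N)%nat then L / 2 * (zeta i + zeta (S i)) else 0.

Definition sqnorm (N : nat) (v : nat -> R) : R := sum_n (fun j => (v j) ^ 2) N.

Definition wz (N : nat) (L : R) (zeta : nat -> R)
  (y nu alpha : nat -> R) : R :=
  L / 2 * sqnorm N (fun j => y j + nu j
        - sum_n (fun i => alpha i * (xv zeta i j - / L * gv N L zeta i j)) (S N))
  + sum_n (fun i => alpha i * (fv N L zeta i
        - / (2 * L) * sqnorm N (gv N L zeta i))) (S N).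

Definition Wvals (N : nat) (L : R) (zeta : nat -> R) (y : nat -> R) (v : R) : Prop :=
  exists nu alpha : nat -> R,
    (forall j, (j <= N)%nat -> 0 <= nu j) /\
    (forall i, (i <= S N)%nat -> 0 <= alpha i) /\
    sum_n alpha (S N) = 1 /\
    v = wz N L zeta y nu alpha.

(* W^zeta(y) = min (= inf, the min being attained) of w^zeta over the feasible set *)
Definition Wz (N : nat) (L : R) (zeta : nat -> R) (y : nat -> R) : R :=
  real (Glb_Rbar (Wvals N L zeta y)).

Definition shift (y : nat -> R) (n : nat) (t : R) : nat -> R :=
  fun j => if (j =? n)%nat then y j + t else y j.

(* Main.v *)
Require Import Defs.
From Stdlib Require Import Reals Lra Lia Classical.
From Coquelicot Require Import Coquelicot.
Open Scope R_scope.
Ltac req := match goal with |- ?a = ?b => change (@eq R a b) end.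


Lemma sumS (a : nat -> R) n : sum_n a (S n) = sum_n a n + a (S n).
Proof. rewrite sum_Sn. reflexivity. Qed.
Lemma sum0 (a : nat -> R) : sum_n a 0 = a 0%nat.
Proof. rewrite sum_O. reflexivity. Qed.

Lemma sum_le (a b : nat -> R) n : (forall i, (i <= n)%nat -> a i <= b i) ->
  sum_n a n <= sum_n b n.
Proof.
  induction n; intros H.
  - rewrite !sum0. apply H; lia.
  - rewrite !sumS. apply Rplus_le_compat; [apply IHn; intros; apply H; lia | apply H; lia].
Qed.

Lemma sum_plus (a b : nat -> R) n : sum_n (fun i => a i + b i) n = sum_n a n + sum_n b n.
Proof. induction n. - rewrite !sum0; lra. - rewrite !sumS, IHn; lra. Qed.

Lemma sum_scal (c : R) (a : nat -> R) n : sum_n (fun i => c * a i) n = c * sum_n a n.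
Proof. induction n. - rewrite !sum0; lra. - rewrite !sumS, IHn; lra. Qed.

Lemma sum_ext_loc (a b : nat -> R) n : (forall i, (i <= n)%nat -> a i = b i) ->
  sum_n a n = sum_n b n.
Proof. intros; apply sum_n_ext_loc; auto. Qed.

Lemma sum_zero (a : nat -> R) n : (forall i, (i <= n)%nat -> a i = 0) -> sum_n a n = 0.
Proof. induction n; intros H. - rewrite sum0; apply H; lia.
  - rewrite sumS, IHn, H; [lra|lia|intros; apply H; lia]. Qed.

Lemma sum_nonneg (a : nat -> R) n : (forall i, (i <= n)%nat -> 0 <= a i) -> 0 <= sum_n a n.
Proof. intros H. rewrite <- (sum_zero (fun _ => 0) n) by auto. apply sum_le; auto. Qed.

Lemma sum_delta (c : R) i n : (i <= n)%nat ->
  sum_n (fun l => if (l =? i)%nat then c else 0) n = c.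
Proof.
  induction n; intros Hi.
  - rewrite sum0. replace i with 0%nat by lia. reflexivity.
  - rewrite sumS. destruct (Nat.eq_dec i (S n)) as [->|Hne].
    + rewrite sum_zero. rewrite Nat.eqb_refl; lra.
      intros l Hl. destruct (Nat.eqb_spec l (S n)); [lia|reflexivity].
    + rewrite IHn by lia. destruct (Nat.eqb_spec (S n) i); [lia|lra].
Qed.

Lemma sum_ge_term (a : nat -> R) n k : (forall i, (i <= n)%nat -> 0 <= a i) -> (k <= n)%nat ->
  a k <= sum_n a n.
Proof.
  intros H Hk. rewrite <- (sum_delta (a k) k n Hk). apply sum_le.
  intros i Hi. destruct (Nat.eqb_spec i k); [subst; lra | apply H; auto].
Qed.

Lemma sum_change (f g : nat -> R) n N : (n <= N)%nat ->
  (forall j, (j <= N)%nat -> j <> n -> f j = g j) ->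
  sum_n f N = sum_n g N + (f n - g n).
Proof.
  intros Hn H. rewrite <- (sum_delta (f n - g n) n N Hn), <- sum_plus.
  apply sum_ext_loc. intros j Hj. destruct (Nat.eqb_spec j n); [subst; lra|].
  rewrite H; auto; lra.
Qed.


Section Z.
Variable N : nat.
Variable z : nat -> R.
Hypothesis Hz : forall i, (i <= S N)%nat -> z (S i) < z i.
Hypothesis Hz0 : z (S (S N)) = 0.

Lemma zmono a b : (a <= b)%nat -> (b <= S (S N))%nat -> z b <= z a.
Proof.
  intros Hab. induction Hab; intros Hb. - lra.
  - specialize (Hz m ltac:(lia)). specialize (IHHab ltac:(lia)). lra.
Qed.

Lemma zstrict a b : (a < b)%nat -> (b <= S (S N))%nat -> z b < z a.
Proof.
  intros Hab Hb. destruct b; [lia|].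
  pose proof (Hz b ltac:(lia)). pose proof (zmono a b ltac:(lia) ltac:(lia)). lra.
Qed.

Lemma znonneg i : (i <= S (S N))%nat -> 0 <= z i.
Proof. intros. rewrite <- Hz0. apply zmono; lia. Qed.
End Z.

Definition sz (z : nat -> R) j := sqrt (z j - z (S j)).
Definition ee (z : nat -> R) (l j : nat) : R :=
  if (j <=? l)%nat then z j - z (S l) else 0.
Definition comp (N : nat) (z : nat -> R) (y nu al : nat -> R) (j : nat) : R :=
  y j + nu j + / sz z j * sum_n (fun l => al l * ee z l j) (S N).

Lemma sz_pos N z (Hz : forall i, (i <= S N)%nat -> z (S i) < z i) j :
  (j <= S N)%nat -> 0 < sz z j.
Proof. intros. unfold sz. apply sqrt_lt_R0. specialize (Hz j H). lra. Qed.

Lemma sz_sq N z (Hz : forall i, (i <= S N)%nat -> z (S i) < z i) j :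
  (j <= S N)%nat -> sz z j * sz z j = z j - z (S j).
Proof. intros. unfold sz. apply sqrt_sqrt. specialize (Hz j H). lra. Qed.

Lemma wz_formula N L z y nu al :
  0 < L -> (forall i, (i <= S N)%nat -> z (S i) < z i) -> z (S (S N)) = 0 ->
  wz N L z y nu al = L / 2 * sum_n (fun j => (comp N z y nu al j) ^ 2) N
     + L * sum_n (fun l => al l * z (S l)) (S N).
Proof.
  intros HL Hz Hz0. unfold wz. f_equal.
  - f_equal. unfold sqnorm. apply sum_ext_loc. intros j Hj. unfold comp.
    assert (Hs := sz_pos N z Hz j ltac:(lia)). assert (Hs2 := sz_sq N z Hz j ltac:(lia)).
    f_equal.
    assert (E : sum_n (fun i => al i * (xv z i j - / L * gv N L z i j)) (S N)
      = sum_n (fun l => -1 * (/ sz z j * (al l * ee z l j))) (S N)).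
    2:{ rewrite E, !sum_scal. ring. }
    apply sum_ext_loc. intros i Hi.
    unfold xv, gv, ee. fold (sz z j).
    destruct (Nat.ltb_spec j i); destruct (Nat.leb_spec j i); destruct (Nat.eqb_spec j i);
      try lia; simpl.
    + rewrite Bool.andb_false_r. field. lra.
    + subst. replace (i <=? N)%nat with true by (symmetry; apply Nat.leb_le; lia). simpl.
      fold (sz z i). rewrite <- Hs2. field. split; lra.
    + rewrite Bool.andb_false_r. lra.
  - rewrite <- sum_scal. apply sum_ext_loc. intros i Hi.
    unfold fv, sqnorm, gv. destruct (Nat.leb_spec i N).
    + simpl. rewrite (sum_ext_loc _ (fun j => if (j =? i)%nat then (L * sqrt (z i - z (S i)))^2 else 0)).
      2:{ intros j Hj. destruct (j =? i)%nat; simpl; ring. }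
      rewrite sum_delta by lia. fold (sz z i). rewrite Rpow_mult_distr.
      replace (sz z i ^ 2) with (z i - z (S i)) by (rewrite <- sz_sq with (N:=N); auto; ring).
      field. lra.
    + simpl. rewrite sum_zero by (intros; simpl; ring). replace i with (S N) by lia.
      rewrite Hz0. field. lra.
Qed.


Definition cj (z y : nat -> R) (mu : R) (j : nat) : R :=
  y j + (z j - Rmin (z j) mu) / sz z j.
Definition Fz (N : nat) (z y : nat -> R) (mu : R) : R :=
  / 2 * sum_n (fun j => (Rmax 0 (cj z y mu j)) ^ 2) N + mu.
Definition feasible (N : nat) (nu al : nat -> R) : Prop :=
  (forall j, (j <= N)%nat -> 0 <= nu j) /\ (forall i, (i <= S N)%nat -> 0 <= al i) /\
  sum_n al (S N) = 1.
Definition mean (N : nat) (z al : nat -> R) := sum_n (fun l => al l * z (S l)) (S N).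

Lemma sq_max c x : c <= x -> (Rmax 0 c) ^ 2 <= x ^ 2.
Proof. intros. unfold Rmax. destruct (Rle_dec 0 c); nra. Qed.

Lemma Rmin_mono a b c : b <= c -> Rmin a b <= Rmin a c.
Proof. intros. unfold Rmin. destruct (Rle_dec a b); destruct (Rle_dec a c); lra. Qed.

Lemma Rmax_mono a b c : b <= c -> Rmax a b <= Rmax a c.
Proof. intros. unfold Rmax. destruct (Rle_dec a b); destruct (Rle_dec a c); lra. Qed.

Lemma sum_cm (al : nat -> R) c M : sum_n al M = 1 -> sum_n (fun l => al l * c) M = c.
Proof. intros H. rewrite (sum_ext_loc _ (fun l => c * al l)) by (intros; ring).
  rewrite sum_scal, H. req. ring. Qed.

Section Red.
Variable N : nat.
Variable L : R.
Variable z : nat -> R.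
Hypothesis HL : 0 < L.
Hypothesis Hz : forall i, (i <= S N)%nat -> z (S i) < z i.
Hypothesis Hz0 : z (S (S N)) = 0.

Lemma ee_min l j : (j <= N)%nat -> (l <= S N)%nat -> ee z l j = z j - Rmin (z j) (z (S l)).
Proof.
  intros Hj Hl. unfold ee. destruct (Nat.leb_spec j l).
  - rewrite Rmin_right; [lra|]. apply (zmono N z Hz); lia.
  - rewrite Rmin_left; [lra|]. apply (zmono N z Hz); lia.
Qed.

Lemma lowerF y nu al : feasible N nu al -> L * Fz N z y (mean N z al) <= wz N L z y nu al.
Proof.
  intros [Hnu [Hal Hs]]. rewrite wz_formula; auto. unfold Fz, mean.
  set (mu := sum_n (fun l => al l * z (S l)) (S N)).
  assert (HS : sum_n (fun j => Rmax 0 (cj z y mu j) ^ 2) N <=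
               sum_n (fun j => comp N z y nu al j ^ 2) N).
  { apply sum_le. intros j Hj. apply sq_max. unfold cj, comp.
    assert (Hsp := sz_pos N z Hz j ltac:(lia)).
    assert (E : sum_n (fun l => al l * ee z l j) (S N) =
                z j - sum_n (fun l => al l * Rmin (z j) (z (S l))) (S N)).
    { rewrite (sum_ext_loc _ (fun l => z j * al l + (-1) * (al l * Rmin (z j) (z (S l))))).
      - rewrite sum_plus. rewrite !sum_scal. rewrite Hs. req. ring.
      - intros l Hl. rewrite ee_min by lia. ring. }
    assert (Hm : sum_n (fun l => al l * Rmin (z j) (z (S l))) (S N) <= Rmin (z j) mu).
    { apply Rmin_glb.
      - apply Rle_trans with (sum_n (fun l => al l * z j) (S N));
          [| rewrite (sum_cm al (z j) (S N) Hs); lra].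
        apply sum_le. intros l Hl.
        apply Rmult_le_compat_l; [auto|apply Rmin_l].
      - apply sum_le. intros l Hl. apply Rmult_le_compat_l; [auto|apply Rmin_r]. }
    rewrite E. unfold Rdiv. specialize (Hnu j Hj).
    assert (0 < / sz z j) by (apply Rinv_0_lt_compat; auto).
    assert (/ sz z j * (Rmin (z j) mu - sum_n (fun l => al l * Rmin (z j) (z (S l))) (S N)) >= 0)
      by (apply Rle_ge, Rmult_le_pos; lra).
    nra. }
  nra.
Qed.

Lemma mean_le al : feasible N (fun _ => 0) al -> mean N z al <= z 1%nat.
Proof.
  intros [_ [Hal Hs]]. unfold mean.
  apply Rle_trans with (sum_n (fun l => al l * z 1%nat) (S N));
    [| rewrite (sum_cm al (z 1%nat) (S N) Hs); lra].
  apply sum_le. intros l Hl. apply Rmult_le_compat_l; auto.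
  apply (zmono N z Hz); lia.
Qed.

Lemma F_mono y k n mu : (k < n)%nat -> (n <= N)%nat -> 0 <= y k -> mu <= z n ->
  Fz N z y (z n) <= Fz N z y mu.
Proof.
  intros Hkn HnN Hyk Hmu. unfold Fz.
  set (T := fun m j => Rmax 0 (cj z y m j) ^ 2).
  assert (Hd : forall j, (j <= N)%nat -> 0 <= T mu j - T (z n) j).
  { intros j Hj. unfold T. assert (Hsp := sz_pos N z Hz j ltac:(lia)).
    assert (cj z y (z n) j <= cj z y mu j).
    { unfold cj, Rdiv. assert (0 < / sz z j) by (apply Rinv_0_lt_compat; auto).
      assert (Rmin (z j) mu <= Rmin (z j) (z n)) by (apply Rmin_mono; auto). nra. }
    assert (Rmax 0 (cj z y (z n) j) <= Rmax 0 (cj z y mu j)) by (apply Rmax_mono; auto).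
    assert (0 <= Rmax 0 (cj z y (z n) j)) by apply Rmax_l. nra. }
  assert (Hk : 2 * (z n - mu) <= T mu k - T (z n) k).
  { unfold T, cj. assert (Hsp := sz_pos N z Hz k ltac:(lia)).
    assert (Hs2 := sz_sq N z Hz k ltac:(lia)).
    assert (znk : z n < z k) by (apply (zstrict N z Hz); lia).
    assert (znk1 : z n <= z (S k)) by (apply (zmono N z Hz); lia).
    rewrite (Rmin_right (z k) mu) by lra. rewrite (Rmin_right (z k) (z n)) by lra.
    set (s := sz z k) in *.
    set (c := y k + (z k - z n) / s).
    assert (Hc : s <= c).
    { unfold c. apply Rle_trans with ((z k - z n) / s); [|lra].
      apply Rmult_le_reg_r with s; auto. unfold Rdiv. rewrite Rmult_assoc, Rinv_l by lra. nra. }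
    set (a := (z n - mu) / s).
    assert (Ha : a * s = z n - mu) by (unfold a; field; lra).
    assert (Ha0 : 0 <= a) by (unfold a, Rdiv; apply Rmult_le_pos; [lra|left; apply Rinv_0_lt_compat; lra]).
    replace (y k + (z k - mu) / s) with (c + a) by (unfold c, a; field; lra).
    rewrite !Rmax_right by lra. nra. }
  assert (E : sum_n (T mu) N = sum_n (T (z n)) N + sum_n (fun j => T mu j - T (z n) j) N).
  { rewrite <- sum_plus. apply sum_ext_loc. intros; ring. }
  assert (G := sum_ge_term (fun j => T mu j - T (z n) j) N k Hd ltac:(lia)).
  simpl in G. unfold T in *. lra.
Qed.

Lemma find_i n mu : (1 <= n)%nat -> (n <= S N)%nat -> z n <= mu -> mu <= z 1%nat ->
  exists i, (i < n)%nat /\ z (S i) <= mu <= z i.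
Proof.
  intros H1. induction H1; intros Hn Hl Hu.
  - exists 0%nat. split; [lia|]. pose proof (Hz 0%nat ltac:(lia)). lra.
  - destruct (Rle_dec mu (z m)).
    + exists m. split; [lia|lra].
    + destruct IHle as [i [Hi Hi2]]; [lia|lra|lra|]. exists i; split; [lia|auto].
Qed.
End Red.

Definition tp (i : nat) (lam : R) (l : nat) : R :=
  if (l =? i)%nat then lam else if (S l =? i)%nat then 1 - lam else 0.

Lemma tp_sum (f : nat -> R) M i lam : (i <= M)%nat -> (i = 0%nat -> lam = 1) ->
  sum_n (fun l => tp i lam l * f l) M = lam * f i + (1 - lam) * f (pred i).
Proof.
  intros HiM H0.
  rewrite (sum_ext_loc _ (fun l => (if (l =? i)%nat then lam * f i else 0) +
            (if (l =? pred i)%nat then (1 - lam) * f (pred i) else 0))).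
  - rewrite sum_plus, !sum_delta by lia. req. ring.
  - intros l Hl. unfold tp.
    destruct (Nat.eqb_spec l i); destruct (Nat.eqb_spec (S l) i); destruct (Nat.eqb_spec l (pred i));
      subst; try lia; try ring.
    + rewrite H0 by lia. ring.
    + replace (pred (S l)) with l by lia. ring.
Qed.


Section Red2.
Variable N : nat.
Variable L : R.
Variable z : nat -> R.
Hypothesis HL : 0 < L.
Hypothesis Hz : forall i, (i <= S N)%nat -> z (S i) < z i.
Hypothesis Hz0 : z (S (S N)) = 0.

Lemma ee_tp i lam mu j : (j <= N)%nat -> (i <= N)%nat -> z (S i) <= mu <= z i ->
  lam * (z i - z (S i)) = z i - mu -> (i = 0%nat -> lam = 1) ->
  lam * ee z i j + (1 - lam) * ee z (pred i) j = z j - Rmin (z j) mu.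
Proof.
  intros Hj Hi Hmu Hlam H0. unfold ee.
  destruct (Nat.leb_spec j i); destruct (Nat.leb_spec j (pred i)).
  -
    destruct i as [|i']. { simpl in *. assert (j = 0%nat) by lia. subst.
      assert (Hl1 : lam = 1) by auto. rewrite Hl1 in *. rewrite Rmin_right by lra. lra. }
    simpl pred in *. rewrite Rmin_right.
    + lra.
    + assert (z (S i') <= z j) by (apply (zmono N z Hz); lia). lra.
  - assert (j = i) by lia. subst j. rewrite Rmin_right by lra. lra.
  - lia.
  - rewrite Rmin_left. + ring.
    + assert (z j <= z (S i)) by (apply (zmono N z Hz); lia). lra.
Qed.

Lemma attain y n mu : (1 <= n)%nat -> (n <= N)%nat -> z n <= mu -> mu <= z 1%nat ->
  exists nu al, feasible N nu al /\ (forall l, (n <= l)%nat -> al l = 0) /\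
    wz N L z y nu al = L * Fz N z y mu.
Proof.
  intros Hn1 HnN Hl Hu.
  destruct (find_i N z Hz n mu Hn1 ltac:(lia) Hl Hu) as [i [Hi [Hi1 Hi2]]].
  assert (Hd := Hz i ltac:(lia)).
  set (lam := (z i - mu) / (z i - z (S i))).
  assert (Hlam : lam * (z i - z (S i)) = z i - mu) by (unfold lam; field; lra).
  assert (Hlam0 : 0 <= lam) by (unfold lam, Rdiv; apply Rmult_le_pos; [lra|left; apply Rinv_0_lt_compat; lra]).
  assert (Hlam1 : lam <= 1).
  { apply Rmult_le_reg_r with (z i - z (S i)); [lra|]. rewrite Hlam. lra. }
  assert (H0 : i = 0%nat -> lam = 1).
  { intros ->. assert (mu = z 1%nat) by lra. subst mu.
    unfold lam. field. lra. }
  exists (fun j => Rmax 0 (- cj z y mu j)), (tp i lam).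
  split; [|split].
  - split; [|split].
    + intros; apply Rmax_l.
    + intros l _. unfold tp. destruct (l =? i)%nat; [lra|]. destruct (S l =? i)%nat; lra.
    + rewrite (sum_ext_loc _ (fun l => tp i lam l * 1)) by (intros; req; ring).
      rewrite tp_sum by (auto; lia). req. ring.
  - intros l Hl0. unfold tp. destruct (Nat.eqb_spec l i); [lia|]. destruct (Nat.eqb_spec (S l) i); [lia|auto].
  - rewrite wz_formula; auto. unfold Fz.
    rewrite (tp_sum (fun l => z (S l))) by (auto; lia).
    assert (Hm : lam * z (S i) + (1 - lam) * z (S (pred i)) = mu).
    { destruct i as [|i']. - rewrite H0 by auto. simpl. lra.
      - simpl pred. lra. }
    rewrite Hm.
    rewrite (sum_ext_loc _ (fun j => Rmax 0 (cj z y mu j) ^ 2)). { req. field. }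
    intros j Hj. unfold comp. rewrite (tp_sum (fun l => ee z l j)) by (auto; lia).
    rewrite (ee_tp i lam mu j) by (auto; lia).
    assert (Hsp := sz_pos N z Hz j ltac:(lia)).
    unfold cj. unfold Rdiv.
    replace (/ sz z j * (z j - Rmin (z j) mu)) with ((z j - Rmin (z j) mu) * / sz z j) by ring.
    set (c := y j + (z j - Rmin (z j) mu) * / sz z j).
    unfold Rmax. destruct (Rle_dec 0 (- c)); destruct (Rle_dec 0 c); unfold c in *; nra.
Qed.

Lemma reduce y k n nu al : (k < n)%nat -> (n <= N)%nat -> 0 <= y k -> feasible N nu al ->
  exists nu' al', feasible N nu' al' /\ (forall l, (n <= l)%nat -> al' l = 0) /\
    wz N L z y nu' al' <= wz N L z y nu al.
Proof.
  intros Hkn HnN Hyk Hf.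
  set (mu := mean N z al).
  assert (Hmu1 : mu <= z 1%nat).
  { destruct Hf as [_ [Hal Hs]]. apply (mean_le N z Hz). split; [|split]; auto. intros; lra. }
  assert (Hn1 : z n <= z 1%nat) by (apply (zmono N z Hz); lia).
  destruct (attain y n (Rmax mu (z n)) ltac:(lia) HnN (Rmax_r _ _)
     ltac:(apply Rmax_lub; lra)) as [nu' [al' [Hf' [Hr Hw]]]].
  exists nu', al'. split; [auto|split; [auto|]].
  rewrite Hw. apply Rle_trans with (L * Fz N z y mu); [|apply lowerF; auto].
  apply Rmult_le_compat_l; [lra|].
  unfold Rmax. destruct (Rle_dec mu (z n)).
  - apply (F_mono N z Hz y k n mu); auto.
  - lra.
Qed.
End Red2.


Lemma glb_fin (E : R -> Prop) : (exists x, E x) -> (forall x, E x -> 0 <= x) ->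
  (forall x, E x -> real (Glb_Rbar E) <= x) /\
  (forall b, (forall x, E x -> b <= x) -> b <= real (Glb_Rbar E)).
Proof.
  intros [x0 Hx0] Hlb. destruct (Glb_Rbar_correct E) as [H1 H2].
  destruct (Glb_Rbar E) as [r| |] eqn:Eg.
  - simpl. split.
    + intros x Hx. apply (H1 x Hx).
    + intros b Hb. apply (H2 (Finite b)). intros x Hx. apply Hb; auto.
  - exfalso. specialize (H1 x0 Hx0). simpl in H1. auto.
  - exfalso. assert (Hb : is_lb_Rbar E (Finite 0)) by (intros x Hx; apply Hlb; auto).
    specialize (H2 _ Hb). simpl in H2. auto.
Qed.

Lemma glb_bound (S T : R -> Prop) (c : R) : (exists x, S x) -> (forall x, S x -> 0 <= x) ->
  (forall x, T x -> 0 <= x) -> (forall x, S x -> exists y, T y /\ y <= x + c) ->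
  real (Glb_Rbar T) <= real (Glb_Rbar S) + c.
Proof.
  intros [x0 Hx0] HS HT Htr.
  assert (HTne : exists y, T y) by (destruct (Htr x0 Hx0) as [y [Hy _]]; eauto).
  destruct (glb_fin S (ex_intro _ x0 Hx0) HS) as [S1 S2].
  destruct (glb_fin T HTne HT) as [T1 T2].
  assert (real (Glb_Rbar T) - c <= real (Glb_Rbar S)); [|lra].
  apply S2. intros x Hx. destruct (Htr x Hx) as [y [Hy Hyx]]. specialize (T1 y Hy). lra.
Qed.

Section Main.
Variable N : nat.
Variable L : R.
Variable z : nat -> R.
Variable ybar : nat -> R.
Variables k n : nat.
Hypothesis HL : 0 < L.
Hypothesis Hz : forall i, (i <= S N)%nat -> z (S i) < z i.
Hypothesis Hz0 : z (S (S N)) = 0.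
Hypothesis Hkn : (k < n)%nat.
Hypothesis HnN : (n <= N)%nat.
Hypothesis Hyk : 0 <= ybar k.
Hypothesis Hyn : ybar n = 0.

Lemma wz_nonneg y nu al : feasible N nu al -> 0 <= wz N L z y nu al.
Proof.
  intros [_ [Hal _]]. rewrite wz_formula; auto.
  assert (0 <= sum_n (fun j => comp N z y nu al j ^ 2) N)
    by (apply sum_nonneg; intros; apply pow2_ge_0).
  assert (0 <= sum_n (fun l => al l * z (S l)) (S N)).
  { apply sum_nonneg; intros. apply Rmult_le_pos; auto. apply (znonneg N z Hz Hz0); lia. }
  nra.
Qed.

Lemma Wvals_nonneg y x : Wvals N L z y x -> 0 <= x.
Proof. intros [nu [al [H1 [H2 [H3 ->]]]]]. apply wz_nonneg. split; auto. Qed.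

Lemma Wvals_ne y : exists x, Wvals N L z y x.
Proof.
  exists (wz N L z y (fun _ => 0) (fun i => if (i =? 0)%nat then 1 else 0)).
  exists (fun _ => 0), (fun i => if (i =? 0)%nat then 1 else 0).
  split; [intros; lra|split; [|split; [|reflexivity]]].
  - intros i _. destruct (i =? 0)%nat; lra.
  - apply sum_delta. lia.
Qed.

Lemma transfer src tgt x : Wvals N L z (shift ybar n src) x ->
  exists x', Wvals N L z (shift ybar n tgt) x' /\ x' <= x + L / 2 * tgt ^ 2.
Proof.
  intros [nu [al [H1 [H2 [H3 ->]]]]].
  assert (Hyk' : 0 <= shift ybar n src k).
  { unfold shift. destruct (Nat.eqb_spec k n); [lia|auto]. }
  destruct (reduce N L z HL Hz Hz0 (shift ybar n src) k n nu al Hkn HnN Hyk'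
     ltac:(split; auto)) as [nu1 [al1 [[F1 [F2 F3]] [Hr Hw]]]].
  set (nu2 := fun j => if (j =? n)%nat then Rmax 0 (src - tgt + nu1 n) else nu1 j).
  exists (wz N L z (shift ybar n tgt) nu2 al1). split.
  - exists nu2, al1. split; [|split; [auto|split; auto]].
    intros j Hj. unfold nu2. destruct (j =? n)%nat; [apply Rmax_l|auto].
  - apply Rle_trans with (wz N L z (shift ybar n src) nu1 al1 + L / 2 * tgt ^ 2); [|lra].
    rewrite !wz_formula; auto.
    assert (Hzero : forall y nu, comp N z y nu al1 n = y n + nu n).
    { intros y nu0. unfold comp. rewrite sum_zero; [ring|].
      intros l Hl. destruct (Compare_dec.le_lt_dec n l). - rewrite Hr; auto; ring.
      - unfold ee. destruct (Nat.leb_spec n l); [lia|ring]. }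
    rewrite (sum_change (fun j => comp N z (shift ybar n tgt) nu2 al1 j ^ 2)
                        (fun j => comp N z (shift ybar n src) nu1 al1 j ^ 2) n N HnN).
    2:{ intros j Hj Hne. unfold comp, shift, nu2. destruct (Nat.eqb_spec j n); [lia|auto]. }
    rewrite !Hzero. unfold shift, nu2. rewrite Nat.eqb_refl, Hyn.
    assert (Hq : (0 + tgt + Rmax 0 (src - tgt + nu1 n)) ^ 2 <= (0 + src + nu1 n) ^ 2 + tgt ^ 2).
    { unfold Rmax. destruct (Rle_dec 0 (src - tgt + nu1 n)).
      - replace (0 + tgt + (src - tgt + nu1 n)) with (0 + src + nu1 n) by ring. pose proof (pow2_ge_0 tgt). lra.
      - replace (0 + tgt + 0) with tgt by ring. pose proof (pow2_ge_0 (0 + src + nu1 n)). lra. }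
    nra.
Qed.

Lemma fbound t : Rabs (Wz N L z (shift ybar n t) - Wz N L z (shift ybar n 0)) <= L / 2 * t ^ 2.
Proof.
  unfold Wz.
  assert (A := glb_bound (Wvals N L z (shift ybar n t)) (Wvals N L z (shift ybar n 0))
     (L / 2 * 0 ^ 2) (Wvals_ne _) (Wvals_nonneg _) (Wvals_nonneg _) (transfer t 0)).
  assert (B := glb_bound (Wvals N L z (shift ybar n 0)) (Wvals N L z (shift ybar n t))
     (L / 2 * t ^ 2) (Wvals_ne _) (Wvals_nonneg _) (Wvals_nonneg _) (transfer 0 t)).
  simpl in A. apply Rabs_le. split; nra.
Qed.
End Main.


Theorem corollary3 (N : nat) (L : R) (zeta : nat -> R) (ybar : nat -> R) (k n : nat) :
  (0 < N)%nat -> 0 < L ->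
  (forall i, (i <= S N)%nat -> zeta (S i) < zeta i) ->
  zeta (S (S N)) = 0 ->
  (k < n)%nat -> (n <= N)%nat ->
  0 <= ybar k -> ybar n = 0 ->
  is_derive (fun t => Wz N L zeta (shift ybar n t)) 0 0.
Proof.
  intros HN HL Hz Hz0 Hkn HnN Hyk Hyn.
  apply is_derive_Reals. intros eps Heps.
  assert (Hd : 0 < eps / L) by (apply Rdiv_lt_0_compat; auto).
  exists (mkposreal _ Hd). intros h Hh Hlt. simpl in Hlt.
  assert (Hb := fbound N L zeta ybar k n HL Hz Hz0 Hkn HnN Hyk Hyn h).
  rewrite Rplus_0_l.
  assert (Hah : 0 < Rabs h) by (apply Rabs_pos_lt; auto).
  replace ((Wz N L zeta (shift ybar n h) - Wz N L zeta (shift ybar n 0)) / h - 0)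
    with ((Wz N L zeta (shift ybar n h) - Wz N L zeta (shift ybar n 0)) / h) by ring.
  unfold Rdiv. rewrite Rabs_mult, Rabs_inv.
  assert (Hh2 : h ^ 2 = Rabs h * Rabs h) by (rewrite <- Rabs_mult, Rabs_right; [ring| nra]).
  rewrite Hh2 in Hb.
  apply Rmult_lt_reg_r with (Rabs h); auto.
  rewrite Rmult_assoc, Rinv_l by lra.
  assert (Rabs h * L < eps).
  { apply Rmult_lt_reg_r with (/ L). apply Rinv_0_lt_compat; auto.
    rewrite Rmult_assoc, Rinv_r by lra. unfold Rdiv in Hlt. lra. }
  nra.
Qed.
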